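(* Let $Y$ be a discrete random variable taking values in a set $\mathcal{Y}$, and let $B=(B_0,\dots,B_{m-1})$ be a random vector taking values in $\{0,1\}^m$. Assume $\mathbf{H}(Y\mid B)=0$ and that the components of $B$ are independent conditionally on $Y$. For $y_n\in\mathcal{Y}$ with $P(Y=y_n)>0$, let $\mathcal{B}_n=\{b\in\{0,1\}^m : P(B=b\mid Y=y_n)\neq 0\}$, let $\mathcal{B}=\bigcup_{y_n:\,P(Y=y_n)>0}\mathcal{B}_n$, define $\varphi^{(n)}\in\{-1,0,1\}^m$ by $\varphi^{(n)}_i=0$ if $P(B_i=1\mid Y=y_n)\in(0,1)$, $\varphi^{(n)}_i=-1$ if $P(B_i=1\mid Y=y_n)=0$, $\varphi^{(n)}_i=1$ if $P(B_i=1\mid Y=y_n)=1$, and define $\mu^{(n)}\in\mathbb{R}^{m+1}$ by $\mu^{(n)}_i=2\varphi^{(n)}_i$ for $0\le i<m$ and $\mu^{(n)}_m=1-\sum_{i=0}^{m-1}\big[(\varphi^{(n)}_i)^2+\varphi^{(n)}_i\big]$. Then for every $y_n$ with $P(Y=y_n)>0$ and every $b\in\mathcal{B}$: if $b\in\mathcal{B}_n$ then $(b_0,\dots,b_{m-1},1)\cdot\mu^{(n)}>0$, and if $b\notin\mathcal{B}_n$ then $(b_0,\dots,b_{m-1},1)\cdot\mu^{(n)}<0$.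
   Context: $\mathbf{H}(Y\mid B)$ is the conditional Shannon entropy; conditional independence of the components means $P(B=b\mid Y=y)=\prod_i P(B_i=b_i\mid Y=y)$ for all $b$ and all $y$ with $P(Y=y)>0$. The dot denotes the standard inner product on $\mathbb{R}^{m+1}$. *)

(* Defs.v *)
From HB Require Import structures.
From mathcomp Require Import all_boot all_order all_algebra.
From mathcomp Require Import classical_sets boolp reals ereal esum exp.
Set Implicit Arguments. Unset Strict Implicit. Unset Printing Implicit Defensive.
Import Order.TTheory GRing.Theory Num.Theory.
Local Open Scope ring_scope.
Local Open Scope classical_set_scope.

Notation bvec m := {ffun 'I_m -> bool}.

Section Prob.
Variables (R : realType) (Ty : choiceType) (m : nat).
(* pj y b = P(Y = y, B = b): the joint probability mass function of (Y,B).
   Y is discrete (countable support allowed, Ty is an arbitrary choiceType). *)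
Variable pj : Ty -> bvec m -> R.

Definition pY (y : Ty) : R := \sum_(b : bvec m) pj y b.
Definition pB (b : bvec m) : R := fine (\esum_(y in [set: Ty]) (pj y b)%:E).

Definition is_joint_pmf : Prop :=
  (forall y b, 0 <= pj y b) /\ \esum_(y in [set: Ty]) (pY y)%:E = 1%E.

Definition condB (y : Ty) (b : bvec m) : R := pj y b / pY y.
Definition condBi1 (y : Ty) (i : 'I_m) : R :=
  (\sum_(b : bvec m | b i) pj y b) / pY y.
Definition condBi (y : Ty) (i : 'I_m) (c : bool) : R :=
  (\sum_(b : bvec m | b i == c) pj y b) / pY y.

Definition cond_indep : Prop :=
  forall y, 0 < pY y -> forall b : bvec m,
    condB y b = \prod_(i < m) condBi y i (b i).

(* Conditional Shannon entropy H(Y|B) = - sum_{y,b} P(y,b) log (P(y,b)/P(b)),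
   with 0 log 0 = 0 (natural log; the base is irrelevant for H = 0).
   Every summand is nonnegative, so the (extended-real) series is well defined. *)
Definition cond_entropy : \bar R :=
  (\sum_(b : bvec m) \esum_(y in [set: Ty])
     (if pj y b == 0 then 0 else - (pj y b * ln (pj y b / pB b)))%:E)%E.

Definition phi (y : Ty) (i : 'I_m) : R :=
  if condBi1 y i == 0 then -1 else if condBi1 y i == 1 then 1 else 0.

Definition mu (y : Ty) (k : 'I_(m + 1)) : R :=
  match split k with
  | inl i => 2 * phi y i
  | inr _ => 1 - \sum_(i < m) (phi y i ^+ 2 + phi y i)
  end.

Definition ext1 (b : bvec m) (k : 'I_(m + 1)) : R :=
  match split k with
  | inl i => (b i)%:R
  | inr _ => 1
  end.

Definition dotR (u v : 'I_(m + 1) -> R) : R := \sum_(k < m + 1) u k * v k.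

Definition Bset (y : Ty) (b : bvec m) : Prop := condB y b != 0.
Definition Ball (b : bvec m) : Prop := exists y, 0 < pY y /\ Bset y b.

End Prob.

(* Main.v *)
Require Import Defs.
From HB Require Import structures.
From mathcomp Require Import all_boot all_order all_algebra.
From mathcomp Require Import classical_sets boolp reals ereal esum exp.
From mathcomp Require Import lra.
Import Order.TTheory GRing.Theory Num.Theory.
Local Open Scope ring_scope.

Section L.
Variables (R : realType) (Ty : choiceType) (m : nat)
    (pj : Ty -> {ffun 'I_m -> bool} -> R).

Definition tt_ (y : Ty) (b : {ffun 'I_m -> bool}) (i : 'I_m) : R :=
  2 * (b i)%:R * phi pj y i - (phi pj y i ^+ 2 + phi pj y i).

Lemma dot_eq y b : dotR (ext1 R b) (mu pj y) = 1 + \sum_(i < m) tt_ y b i.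
Proof.
rewrite /dotR big_split_ord /= big_ord1.
have -> : \sum_(i < m) ext1 R b (lshift 1 i) * mu pj y (lshift 1 i)
          = \sum_(i < m) (b i)%:R * (2 * phi pj y i).
  apply: eq_bigr => i _.
  by rewrite /ext1 /mu (unsplitK (inl _ i)).
rewrite /ext1 /mu (unsplitK (inr _ ord0)) mul1r /tt_.
rewrite sumrB big_split /=.
have -> : \sum_(i < m) 2 * (b i)%:R * phi pj y i
          = \sum_(i < m) (b i)%:R * (2 * phi pj y i).
  by apply: eq_bigr => i _; rewrite mulrA (mulrC 2).
by rewrite addrCA addrA.
Qed.

Lemma condBi_true y i : condBi pj y i true = condBi1 pj y i.
Proof. by rewrite /condBi /condBi1; congr (_ / _); apply: eq_bigl => b; rewrite eqb_id. Qed.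

Lemma condBi_false y i : 0 < pY pj y -> condBi pj y i false = 1 - condBi1 pj y i.
Proof.
move=> hp; rewrite /condBi /condBi1.
have : pY pj y = \sum_(b : bvec m | b i) pj y b + \sum_(b : bvec m | ~~ b i) pj y b.
  by rewrite /pY (bigID (fun b : {ffun 'I_m -> bool} => b i)).
have -> : \sum_(b : bvec m | b i == false) pj y b = \sum_(b : bvec m | ~~ b i) pj y b.
  by apply: eq_bigl => b; rewrite eqbF_neg.
move=> e.
have hne : pY pj y != 0 by rewrite gt_eqF.
have -> : \sum_(b : bvec m | ~~ b i) pj y b = pY pj y - \sum_(b : bvec m | b i) pj y b.
  by rewrite e addrC addKr.
by rewrite mulrBl divff.
Qed.

Lemma per_i y b i : 0 < pY pj y ->
  (tt_ y b i = 0 /\ condBi pj y i (b i) != 0) \/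
  (tt_ y b i = -2 /\ condBi pj y i (b i) = 0).
Proof.
move=> hp; rewrite /tt_ /phi.
case: (b i); rewrite ?condBi_true ?condBi_false //=.
- case: eqP => [->|h0]; first by right; split => //; rewrite mulr1; lra.
  case: eqP => [->|h1]; first by left; split; [lra| rewrite ?oner_eq0].
  by left; split; [lra| apply/eqP].
- case: eqP => [->|h0]; first by left; split; [lra| rewrite ?subr0 ?oner_eq0].
  case: eqP => [->|h1]; first by right; split; [lra| rewrite ?subrr].
  left; split; first lra.
  by rewrite subr_eq0; apply/eqP => h; apply: h1.
Qed.

End L.

Theorem lemma6 (R : realType) (Ty : choiceType) (m : nat)
    (pj : Ty -> {ffun 'I_m -> bool} -> R) :
  is_joint_pmf pj ->
  cond_entropy pj = 0%E ->
  cond_indep pj ->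
  forall (yn : Ty), 0 < pY pj yn ->
  forall b : {ffun 'I_m -> bool}, Ball pj b ->
    (Bset pj yn b -> 0 < dotR (ext1 R b) (mu pj yn)) /\
    (~ Bset pj yn b -> dotR (ext1 R b) (mu pj yn) < 0).
Proof.
move=> _ _ hind yn hp b _; rewrite dot_eq /Bset (hind yn hp b).
split.
- move/prodf_neq0 => hne.
  rewrite big1 ?addr0 ?ltr01 // => i _ {hind}.
  case: (@per_i R Ty m pj yn b i hp) => [[]//|[_ h]].
  by move: (hne i isT); rewrite h eqxx.
- move=> /negP; rewrite negbK => /prodf_eq0 [j _ /eqP hj].
  have hle : forall i, @tt_ R Ty m pj yn b i <= 0.
    move=> i; case: (@per_i R Ty m pj yn b i hp) => [[-> _]|[-> _]]; lra.
  rewrite (bigD1 j) //.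
  have hj2 : @tt_ R Ty m pj yn b j = -2.
    case: (@per_i R Ty m pj yn b j hp) => [[_ h]|[-> _]] //.
    by move: h; rewrite hj eqxx.
  have : \sum_(i < m | i != j) @tt_ R Ty m pj yn b i <= 0.
    by rewrite sumr_le0 // => i _; apply: hle.
  rewrite hj2 /=; set S := \sum_(i < m | i != j) _ => hS; lra.
Qed.
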